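(* Let $U$ be a matchgate unitary on $n$ qubits, let $B=i^bC_{\vec\alpha}$ be a Hermitian Pauli observable (with $\vec\alpha$ a Majorana configuration and $b$ an integer), and let $S\subseteq\{1,\dots,n\}$. For each $s\in S$ let $\mathbf n_s\in\mathbb R^3$ be a unit vector and define the $3\times 3$ matrix $\mathbf M_s$ by the requirement that $\frac{1}{2^{n+2}}\|[\mathbf n\cdot\boldsymbol\sigma_s,U^\dagger BU]\|^2=\mathbf n^*\cdot\mathbf M_s\cdot\mathbf n$ for all $\mathbf n$. For each qubit $j\in\{1,\dots,n\}$ choose a unit Bloch vector $\mathbf n^\perp_j$, with $\mathbf n^\perp_j\perp\mathbf n_j$ for $j\in S$, and consider the product basis $\{\otimes_{j=1}^n|(-1)^{\ell_j}\mathbf n_j^\perp\rangle\}_{\boldsymbol\ell\in\{0,1\}^n}$, where $|\mathbf m\rangle$ denotes the single-qubit pure state with Bloch vector $\mathbf m$. Then $$\overline{\big|\langle U^\dagger BU\rangle-\langle(\otimes_{s\in S}\mathcal E_s)[U^\dagger BU]\rangle\big|}\le\sum_{s\in S}\sqrt{\mathbf n_s^*\cdot\mathbf M_s\cdot\mathbf n_s},$$ where $\overline{(\cdot)}$ denotes the uniform average over the $2^n$ states of this product basis (expectation values taken in each basis state), and $\mathcal E_s$ is the completely depolarizing channel on qubit $s$, $\mathcal E_s(O)=\frac14\big(O+\sum_{k\in\{x,y,z\}}\sigma^k_sO\sigma^k_s\big)$.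
   Context: On $n$ qubits, $\boldsymbol\sigma_s=(\sigma^x_s,\sigma^y_s,\sigma^z_s)=(X_s,Y_s,Z_s)$ are the Pauli operators on qubit $s$ and $\mathbf n\cdot\boldsymbol\sigma_s=\sum_k n_k\sigma^k_s$. Majorana operators: $c_{2k-1}=Z_1\cdots Z_{k-1}X_k$, $c_{2k}=Z_1\cdots Z_{k-1}Y_k$. A Majorana configuration is an ordered tuple $\vec\alpha=(\alpha_1<\dots<\alpha_k)$ with entries in $\{1,\dots,2n\}$, and $C_{\vec\alpha}=c_{\alpha_1}\cdots c_{\alpha_k}$. A matchgate unitary is a unitary $U$ on $n$ qubits for which there is $\mathbf u\in\mathbf{SO}(2n)$ with $U^\dagger c_\mu U=\sum_\nu u_{\mu\nu}c_\nu$ for all $\mu$. $\|O\|^2=\mathrm{tr}(O^\dagger O)$ is the Frobenius norm. *)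

(* Defs.v *)
From HB Require Import structures.
From mathcomp Require Import all_boot all_order all_algebra.
From mathcomp Require Import reals complex.
Set Implicit Arguments. Unset Strict Implicit. Unset Printing Implicit Defensive.
Import Order.TTheory GRing.Theory Num.Theory.
Local Open Scope ring_scope.

Section Qubits.
Variable R : realType.
Local Notation C := (R[i]).

(* Computational basis of n qubits: index i : 'I_(2^n); bit k of i is the state of qubit k
   (qubits are 0-indexed: qubit k here is qubit k+1 of the paper). *)
Definition bit (n : nat) (i : 'I_(2 ^ n)) (k : 'I_n) : 'I_2 := inord (odd (i %/ 2 ^ k)).

Definition tensorn (n : nat) (A : 'I_n -> 'M[C]_2) : 'M[C]_(2 ^ n) :=
  \matrix_(i, j) \prod_(k < n) A k (bit i k) (bit j k).

Definition on_qubit (n : nat) (k : 'I_n) (A : 'M[C]_2) : 'M[C]_(2 ^ n) :=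
  tensorn (fun l => if l == k then A else 1%:M).

Definition pauliX : 'M[C]_2 := \matrix_(i, j) (if i != j then 1 else 0).
Definition pauliY : 'M[C]_2 :=
  \matrix_(i, j) (if i == j then 0 else if (i : nat) == 0%N then - 'i else 'i).
Definition pauliZ : 'M[C]_2 :=
  \matrix_(i, j) (if i == j then (if (i : nat) == 0%N then 1 else -1) else 0).
Definition pauli (a : 'I_3) : 'M[C]_2 :=
  if (a : nat) == 0%N then pauliX else if (a : nat) == 1%N then pauliY else pauliZ.

Definition sigma (n : nat) (s : 'I_n) (a : 'I_3) : 'M[C]_(2 ^ n) := on_qubit s (pauli a).

Definition ndot1 (v : 'I_3 -> C) : 'M[C]_2 := \sum_(a < 3) v a *: pauli a.
Definition ndot (n : nat) (v : 'I_3 -> C) (s : 'I_n) : 'M[C]_(2 ^ n) :=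
  \sum_(a < 3) v a *: sigma s a.

Definition adj (m : nat) (A : 'M[C]_m) : 'M[C]_m := (map_mx Num.conj A)^T.
Definition comm (m : nat) (A B : 'M[C]_m) : 'M[C]_m := A *m B - B *m A.
Definition frob2 (m : nat) (A : 'M[C]_m) : C := \tr (adj A *m A).

Definition mxprod (m : nat) (s : seq 'M[C]_m) : 'M[C]_m := foldr (@mulmx C m m m) 1%:M s.

(* Majorana operators (0-indexed, mu : 'I_(2n)):
   c_mu = Z_0 ... Z_{q-1} X_q if mu = 2q, and Z_0 ... Z_{q-1} Y_q if mu = 2q+1
   (this is c_{2k-1}, c_{2k} of the paper with k = q+1). *)
Definition majorana (n : nat) (mu : 'I_(2 * n)) : 'M[C]_(2 ^ n) :=
  tensorn (fun l : 'I_n =>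
    if (l < mu %/ 2)%N then pauliZ
    else if (l : nat) == (mu %/ 2)%N then (if odd mu then pauliY else pauliX)
    else 1%:M).

(* C_alpha = c_{alpha_1} ... c_{alpha_k} for a Majorana configuration alpha_1 < ... < alpha_k,
   represented as the set {alpha_1, ..., alpha_k}; enum lists it in increasing order. *)
Definition majorana_conf (n : nat) (A : {set 'I_(2 * n)}) : 'M[C]_(2 ^ n) :=
  mxprod [seq majorana mu | mu <- enum A].

Definition unitary (m : nat) (U : 'M[C]_m) : Prop :=
  adj U *m U = 1%:M /\ U *m adj U = 1%:M.

Definition matchgate (n : nat) (U : 'M[C]_(2 ^ n)) : Prop :=
  unitary U /\
  exists u : 'M[R]_(2 * n),
    u^T *m u = 1%:M /\ \det u = 1 /\
    forall mu : 'I_(2 * n),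
      adj U *m majorana mu *m U = \sum_(nu < 2 * n) (u mu nu)%:C%C *: majorana nu.

Definition qform (v : 'I_3 -> C) (M : 'M[C]_3) : C :=
  \sum_(a < 3) \sum_(b < 3) Num.conj (v a) * M a b * v b.

Definition depol (n : nat) (s : 'I_n) (O : 'M[C]_(2 ^ n)) : 'M[C]_(2 ^ n) :=
  4%:R^-1 *: (O + \sum_(a < 3) sigma s a *m O *m sigma s a).
Definition depolS (n : nat) (S : {set 'I_n}) (O : 'M[C]_(2 ^ n)) : 'M[C]_(2 ^ n) :=
  foldr (@depol n) O (enum S).

Definition bloch_state (m : 'I_3 -> R) : 'M[C]_2 :=
  2%:R^-1 *: (1%:M + ndot1 (fun a => (m a)%:C%C)).

Definition basis_state (n : nat) (nperp : 'I_n -> 'I_3 -> R) (l : {ffun 'I_n -> bool}) :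
  'M[C]_(2 ^ n) :=
  tensorn (fun j => bloch_state (fun a => (-1) ^+ l j * nperp j a)).

Definition expv (m : nat) (rho O : 'M[C]_m) : C := \tr (rho *m O).

Definition unit3 (v : 'I_3 -> R) : Prop := \sum_(a < 3) v a ^+ 2 = 1.
Definition dot3 (v w : 'I_3 -> R) : R := \sum_(a < 3) v a * w a.

End Qubits.

Arguments tensorn {R n}. Arguments on_qubit {R n}. Arguments pauliX {R}. Arguments pauliY {R}.
Arguments pauliZ {R}. Arguments pauli {R}. Arguments sigma {R n}. Arguments ndot1 {R}.
Arguments ndot {R n}. Arguments adj {R m}. Arguments comm {R m}. Arguments frob2 {R m}.
Arguments mxprod {R m}. Arguments majorana {R n}. Arguments majorana_conf {R n}.
Arguments unitary {R m}. Arguments matchgate {R n}. Arguments qform {R}.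
Arguments depol {R n}. Arguments depolS {R n}. Arguments bloch_state {R}.
Arguments basis_state {R n}. Arguments expv {R m}. Arguments unit3 {R}. Arguments dot3 {R}.

(* Main.v *)
Require Import Defs.
From HB Require Import structures.
From mathcomp Require Import all_boot all_order all_algebra.
From mathcomp Require Import reals complex.
From mathcomp Require Import ring.
Set Implicit Arguments. Unset Strict Implicit. Unset Printing Implicit Defensive.
Import Order.TTheory GRing.Theory Num.Theory.
Local Open Scope ring_scope.

Lemma binrep n i : (i < 2 ^ n)%N -> i = (\sum_(k < n) odd (i %/ 2 ^ k) * 2 ^ k)%N.
Proof.
elim: n i => [|n IH] i hi.
  by rewrite big_ord0; move: hi; rewrite expn0; case: i.
rewrite big_ord_recl /= expn0 divn1 muln1.
have h2 : (i %/ 2 < 2 ^ n)%N by rewrite ltn_divLR // mulnC -expnS.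
transitivity (odd i + (i %/ 2) * 2)%N.
  by rewrite divn2 muln2 odd_double_half.
congr (_ + _)%N; rewrite {1}(IH _ h2) big_distrl /=; apply: eq_bigr => k _.
by rewrite /bump /= add1n expnS divnMA -mulnA (mulnC 2).
Qed.

Section Infra.
Variable R : realType.
Local Notation C := (R[i]).

Definition bits n (i : 'I_(2 ^ n)) : {ffun 'I_n -> 'I_2} := [ffun k => bit i k].

Lemma bitE n (i : 'I_(2 ^ n)) k : nat_of_ord (bit i k) = odd (i %/ 2 ^ k).
Proof. by rewrite /bit inordK // ltnS leq_b1. Qed.

Lemma bits_inj n : injective (@bits n).
Proof.
move=> i j h; apply: val_inj.
rewrite /= (binrep (ltn_ord i)) (binrep (ltn_ord j)).
apply: eq_bigr => k _; move/ffunP: h => /(_ k); rewrite !ffunE => h.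
by rewrite -!bitE h.
Qed.

Lemma bits_bij n : bijective (@bits n).
Proof.
apply: inj_card_bij; first exact: bits_inj.
by rewrite card_ffun !card_ord.
Qed.

Lemma sum_bits n (F : {ffun 'I_n -> 'I_2} -> C) :
  \sum_(i < 2 ^ n) F (bits i) = \sum_f F f.
Proof.
by rewrite (reindex (@bits n)) //; apply: onW_bij; exact: bits_bij.
Qed.


Lemma eq_tensorn n (f g : 'I_n -> 'M[C]_2) : (forall k, f k = g k) -> tensorn f = tensorn g.
Proof. by move=> h; apply/matrixP => i j; rewrite !mxE; apply: eq_bigr => k _; rewrite h. Qed.

Lemma sum_bits_prod n (F : 'I_n -> 'I_2 -> C) :
  \sum_(m < 2 ^ n) \prod_k F k (bit m k) = \prod_k \sum_(b < 2) F k b.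
Proof.
rewrite bigA_distr_bigA /= -(sum_bits (fun phi : {ffun 'I_n -> 'I_2} => \prod_k F k (phi k))).
by apply: eq_bigr => m _; apply: eq_bigr => k _; rewrite ffunE.
Qed.

Lemma tensorn_mul n (f g : 'I_n -> 'M[C]_2) :
  tensorn f *m tensorn g = tensorn (fun k => f k *m g k).
Proof.
apply/matrixP => i j; rewrite !mxE.
under eq_bigr do rewrite ?mxE -big_split /=.
rewrite (sum_bits_prod (fun k b => f k (bit i k) b * g k b (bit j k))).
by apply: eq_bigr => k _; rewrite mxE.
Qed.

Lemma tensorn_tr n (f : 'I_n -> 'M[C]_2) : \tr (tensorn f) = \prod_k \tr (f k).
Proof.
rewrite -(sum_bits_prod (fun k b => f k b b)); apply: eq_bigr => m _; rewrite mxE.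
by [].
Qed.

Lemma tensorn_adj n (f : 'I_n -> 'M[C]_2) : adj (tensorn f) = tensorn (fun k => adj (f k)).
Proof.
apply/matrixP => i j; rewrite !mxE rmorph_prod; apply: eq_bigr => k _.
by rewrite !mxE.
Qed.

Lemma tensorn1 n : tensorn (fun _ : 'I_n => 1%:M) = 1%:M :> 'M[C]_(2 ^ n).
Proof.
apply/matrixP => i j; rewrite !mxE.
case: (eqVneq i j) => [<-|nij].
  by apply: big1 => k _; rewrite mxE eqxx.
idtac.
case: (pickP (fun k => bit i k != bit j k)) => [k hk | h].
  by rewrite (bigD1 k) //= mxE (negbTE hk) mul0r.
have : bits i = bits j by apply/ffunP => k; rewrite !ffunE; move: (h k) => /= /negbFE /eqP.
by move/bits_inj => eij; move: nij; rewrite eij eqxx.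
Qed.

Definition upd n (f : 'I_n -> 'M[C]_2) (s : 'I_n) (X : 'M[C]_2) :=
  fun k => if k == s then X else f k.

Lemma tensorn_updE n (f : 'I_n -> 'M[C]_2) s X i j :
  tensorn (upd f s X) i j = X (bit i s) (bit j s) * \prod_(k | k != s) f k (bit i k) (bit j k).
Proof.
rewrite mxE (bigD1 s) //= /upd eqxx; congr (_ * _).
by apply: eq_bigr => k /negbTE ->.
Qed.

Lemma tensorn_updD n (f : 'I_n -> 'M[C]_2) s X Y :
  tensorn (upd f s (X + Y)) = tensorn (upd f s X) + tensorn (upd f s Y).
Proof. by apply/matrixP => i j; rewrite [RHS]mxE !tensorn_updE mxE mulrDl. Qed.

Lemma tensorn_updZ n (f : 'I_n -> 'M[C]_2) s c X :
  tensorn (upd f s (c *: X)) = c *: tensorn (upd f s X).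
Proof. by apply/matrixP => i j; rewrite [RHS]mxE !tensorn_updE mxE mulrA. Qed.

Lemma tensorn_upd_sum n (f : 'I_n -> 'M[C]_2) s (F : 'I_3 -> 'M[C]_2) :
  tensorn (upd f s (\sum_a F a)) = \sum_a tensorn (upd f s (F a)).
Proof.
apply/matrixP => i j; rewrite !summxE tensorn_updE summxE big_distrl /=.
by apply: eq_bigr => a _; rewrite tensorn_updE.
Qed.

Lemma tensorn_upd_self n (f : 'I_n -> 'M[C]_2) s : tensorn (upd f s (f s)) = tensorn f.
Proof. by apply: eq_tensorn => k; rewrite /upd; case: eqP => // ->. Qed.

Lemma tensorn_sum_ffun n (g : 'I_n -> bool -> 'M[C]_2) :
  \sum_(l : {ffun 'I_n -> bool}) tensorn (fun j => g j (l j)) = tensorn (fun j => g j false + g j true).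
Proof.
apply/matrixP => i j; rewrite summxE [RHS]mxE.
transitivity (\prod_k \sum_(b : bool) g k b (bit i k) (bit j k)).
  by rewrite bigA_distr_bigA; apply: eq_bigr => l _; rewrite mxE.
by apply: eq_bigr => k _; rewrite big_bool mxE addrC.
Qed.

End Infra.
Section One.
Variable R : realType.
Local Notation C := (R[i]).

Definition i0 : 'I_2 := ord0.
Definition i1 : 'I_2 := ord_max.

Lemma mx2P (A B : 'M[C]_2) : A i0 i0 = B i0 i0 -> A i0 i1 = B i0 i1 ->
  A i1 i0 = B i1 i0 -> A i1 i1 = B i1 i1 -> A = B.
Proof.
move=> h00 h01 h10 h11; apply/matrixP => i j.
have hi : i = i0 \/ i = i1 by case: i => [[|[|k]]] hi; [left; exact: val_inj|right; exact: val_inj|by move: hi].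
have hj : j = i0 \/ j = i1 by case: j => [[|[|k]]] hj; [left; exact: val_inj|right; exact: val_inj|by move: hj].
by case: hi => ->; case: hj => ->.
Qed.

Lemma mul2E (A B : 'M[C]_2) i j : (A *m B) i j = A i i0 * B i0 j + A i i1 * B i1 j.
Proof.
have e : lift ord0 ord0 = i1 :> 'I_2 by apply: val_inj.
by rewrite mxE !big_ord_recl big_ord0 addr0 e. Qed.

Lemma tr2E (A : 'M[C]_2) : \tr A = A i0 i0 + A i1 i1.
Proof.
have e : lift ord0 ord0 = i1 :> 'I_2 by apply: val_inj.
by rewrite /mxtrace !big_ord_recl big_ord0 addr0 e. Qed.

Definition a0 : 'I_3 := @Ordinal 3 0 isT.
Definition a1 : 'I_3 := @Ordinal 3 1 isT.
Definition a2 : 'I_3 := @Ordinal 3 2 isT.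
Lemma sum3 (F : 'I_3 -> C) : \sum_(a < 3) F a = F a0 + F a1 + F a2.
Proof.
have e1 : lift ord0 ord0 = a1 by apply: val_inj.
have e2 : lift ord0 (lift ord0 ord0) = a2 :> 'I_3 by apply: val_inj.
have e0 : ord0 = a0 by apply: val_inj.
by rewrite !big_ord_recl big_ord0 addr0 addrA e2 e1 e0. Qed.

Definition pX i j : C := if (i == i0) then (if j == i0 then 0 else 1) else (if j == i0 then 1 else 0).

Lemma entries : (pauliX : 'M[C]_2) i0 i1 = 1.
Proof. rewrite mxE /=. done. Qed.

Lemma ndot1E (v : 'I_3 -> C) i j : ndot1 v i j = v a0 * pauliX i j + v a1 * pauliY i j + v a2 * pauliZ i j.
Proof. by rewrite /ndot1 summxE sum3 !mxE. Qed.

Lemma test (v : 'I_3 -> C) : ndot1 v *m ndot1 v = (v a0 ^+ 2 + v a1 ^+ 2 + v a2 ^+ 2)%:M.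
Proof.
have h : ('i : C) ^+ 2 = -1 by rewrite sqrCi.
apply/mx2P; rewrite !mul2E !ndot1E !mxE /=; ring: h.
Qed.

End One.
Section Two.
Variable R : realType.
Local Notation C := (R[i]).
Lemma bl_idem (w : 'I_3 -> C) : w a2 ^+ 2 = 1 - w a0 ^+ 2 - w a1 ^+ 2 ->
  let B := 2%:R^-1 *: (1%:M + ndot1 w) in B *m B = B.
Proof.
move=> hw B.
have h : ('i : C) ^+ 2 = -1 by rewrite sqrCi.
apply/mx2P; rewrite !mul2E !mxE !ndot1E !mxE /=; by field: h hw.
Qed.
End Two.
Section Three.
Variable R : realType.
Local Notation C := (R[i]).
Definition E1 (X : 'M[C]_2) := 4%:R^-1 *: (X + \sum_(a < 3) pauli a *m X *m pauli a).
Lemma G2 (v w : 'I_3 -> C) : ndot1 v *m ndot1 w *m ndot1 v =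
  (2%:R * (v a0 * w a0 + v a1 * w a1 + v a2 * w a2)) *: ndot1 v - (v a0 ^+ 2 + v a1 ^+ 2 + v a2 ^+ 2) *: ndot1 w.
Proof.
have h : ('i : C) ^+ 2 = -1 by rewrite sqrCi.
apply/mx2P; rewrite !(mul2E, ndot1E, mxE) /=; ring: h.
Qed.
Lemma G3 (X : 'M[C]_2) : \sum_(a < 3) pauli a *m X *m pauli a = (2%:R * \tr X)%:M - X.
Proof.
have h : ('i : C) ^+ 2 = -1 by rewrite sqrCi.
apply/mx2P; rewrite !(mul2E, summxE, sum3, tr2E, mxE) /=; ring: h.
Qed.
End Three.

Section Gen.
Variable R : realType.
Local Notation C := (R[i]).

Lemma adj_mul m (A B : 'M[C]_m) : adj (A *m B) = adj B *m adj A.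
Proof. by rewrite /adj map_mxM trmx_mul. Qed.
Lemma adjD m (A B : 'M[C]_m) : adj (A + B) = adj A + adj B.
Proof. by rewrite /adj map_mxD linearD. Qed.
Lemma adjN m (A : 'M[C]_m) : adj (- A) = - adj A.
Proof. by rewrite /adj map_mxN linearN. Qed.
Lemma adjB m (A B : 'M[C]_m) : adj (A - B) = adj A - adj B.
Proof. by rewrite adjD adjN. Qed.
Lemma adjZ m c (A : 'M[C]_m) : adj (c *: A) = c^* *: adj A.
Proof. by rewrite /adj map_mxZ linearZ. Qed.
Lemma adj1 m : adj (1%:M : 'M[C]_m) = 1%:M.
Proof. by rewrite /adj map_mx1 trmx1. Qed.
Lemma adjK m (A : 'M[C]_m) : adj (adj A) = A.
Proof. by apply/matrixP => i j; rewrite !mxE conjCK. Qed.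
Lemma tr_adj m (A : 'M[C]_m) : \tr (adj A) = (\tr A)^*.
Proof. by rewrite /adj mxtrace_tr /mxtrace rmorph_sum; apply: eq_bigr => i _; rewrite mxE. Qed.
Lemma adj_sum m (F : 'I_3 -> 'M[C]_m) : adj (\sum_a F a) = \sum_a adj (F a).
Proof. by apply/matrixP => i j; rewrite !mxE !summxE rmorph_sum; apply: eq_bigr => a _; rewrite !mxE. Qed.

Lemma frob2_ge0 m (A : 'M[C]_m) : 0 <= frob2 A.
Proof.
rewrite /frob2 /mxtrace; apply: sumr_ge0 => i _; rewrite mxE; apply: sumr_ge0 => j _.
by rewrite mxE mxE mulrC mul_conjC_ge0.
Qed.

Lemma frob2D m (A B : 'M[C]_m) :
  frob2 (A + B) = frob2 A + frob2 B + \tr (adj A *m B) + \tr (adj B *m A).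
Proof.
rewrite /frob2 adjD mulmxDl !mulmxDr !mxtraceD; ring.
Qed.

Lemma frob2N m (A : 'M[C]_m) : frob2 (- A) = frob2 A.
Proof. by rewrite /frob2 adjN mulNmx mulmxN opprK. Qed.

Lemma frob2Z m c (A : 'M[C]_m) : frob2 (c *: A) = c^* * c * frob2 A.
Proof. by rewrite /frob2 adjZ -scalemxAl -scalemxAr !mxtraceZ mulrA. Qed.

Lemma frob2_par m (A B : 'M[C]_m) : frob2 (A + B) <= 2%:R * (frob2 A + frob2 B).
Proof.
have h : frob2 (A + B) + frob2 (A - B) = 2%:R * (frob2 A + frob2 B).
  rewrite !frob2D frob2N adjN mulmxN mulNmx !linearN /=; ring.
by rewrite -h lerDl frob2_ge0.
Qed.

Lemma frob2_CS m (A B : 'M[C]_m) : frob2 A = 1 -> `|\tr (adj A *m B)| ^+ 2 <= frob2 B.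
Proof.
move=> hA; set c := \tr (adj A *m B).
have h := frob2_ge0 (B - c *: A).
have e : \tr (adj B *m A) = c^* by rewrite /c -tr_adj adj_mul adjK.
move: h; rewrite frob2D frob2N adjN adjZ frob2Z hA mulmxN mulNmx !linearN /=.
rewrite -!scalemxAl -!scalemxAr !mxtraceZ e -/c normCKC.
have -> : frob2 B + c^* * c * 1 + - (c * c^*) + - (c^* * c) = frob2 B - c^* * c by ring.
by rewrite subr_ge0.
Qed.

End Gen.

Section Qub.
Variable R : realType.
Local Notation C := (R[i]).

Definition vc (w : 'I_3 -> R) : 'I_3 -> C := fun a => (w a)%:C%C.

Lemma conjR (x : R) : (x%:C%C : C)^* = x%:C%C.
Proof. by apply/conj_Creal/complex_realP; exists x. Qed.

Lemma case3 (a : 'I_3) : a = a0 \/ a = a1 \/ a = a2.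
Proof.
case: a => [[|[|[|k]]] h]; [left|right;left|right;right|by move: h]; exact: val_inj.
Qed.

Lemma sum3R (F : 'I_3 -> R) : \sum_(a < 3) F a = F a0 + F a1 + F a2.
Proof.
have e1 : lift ord0 ord0 = a1 by apply: val_inj.
have e2 : lift ord0 (lift ord0 ord0) = a2 :> 'I_3 by apply: val_inj.
have e0 : ord0 = a0 by apply: val_inj.
by rewrite !big_ord_recl big_ord0 addr0 addrA e2 e1 e0. Qed.

Lemma pauli_sq (a : 'I_3) : pauli a *m pauli a = 1%:M :> 'M[C]_2.
Proof.
have h : ('i : C) ^+ 2 = -1 by rewrite sqrCi.
by case: (case3 a) => [->|[->|->]]; apply/mx2P; rewrite !(mul2E, mxE) /=; ring: h.
Qed.

Lemma conjNi : (- 'i : C)^* = 'i.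
Proof. rewrite rmorphN -[RHS]opprK; congr (- _); exact: conjCi. Qed.

Lemma adj_pauli (a : 'I_3) : adj (pauli a) = pauli a :> 'M[C]_2.
Proof.
by case: (case3 a) => [->|[->|->]]; apply/mx2P; rewrite !mxE /= ?(conjNi, conjCi, rmorphN, rmorph1, rmorph0, opprK).
Qed.

Lemma adj_ndot1 (w : 'I_3 -> R) : adj (ndot1 (vc w)) = ndot1 (vc w).
Proof.
rewrite /ndot1 adj_sum; apply: eq_bigr => a _.
by rewrite adjZ adj_pauli /vc conjR.
Qed.

Lemma unitC (w : 'I_3 -> R) : unit3 w ->
  vc w a0 ^+ 2 + vc w a1 ^+ 2 + vc w a2 ^+ 2 = 1.
Proof. by rewrite /unit3 sum3R /vc => h; rewrite -!rmorphXn -!rmorphD h rmorph1. Qed.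

Lemma dotC (w v : 'I_3 -> R) : dot3 w v = 0 ->
  vc w a0 * vc w a0 * 0 + (vc v a0 * vc w a0 + vc v a1 * vc w a1 + vc v a2 * vc w a2) = 0.
Proof.
rewrite /dot3 sum3R /vc => h; rewrite mulr0 add0r -!rmorphM -!rmorphD.
by rewrite (mulrC (v a0)) (mulrC (v a1)) (mulrC (v a2)) h rmorph0.
Qed.

Lemma tr_bloch (w : 'I_3 -> R) : \tr (bloch_state w) = 1.
Proof. by rewrite /bloch_state tr2E !(mxE, ndot1E) /=; field. Qed.

Lemma adj_bloch (w : 'I_3 -> R) : adj (bloch_state w) = bloch_state w.
Proof.
rewrite /bloch_state adjZ adjD adj1 -/(vc w) adj_ndot1.
by rewrite (_ : 2%:R^-1^* = 2%:R^-1) // fmorphV rmorph_nat.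
Qed.

Lemma bloch_idem (w : 'I_3 -> R) : unit3 w ->
  bloch_state w *m bloch_state w = bloch_state w.
Proof.
move=> /unitC hw; apply: bl_idem.
by rewrite -hw; ring.
Qed.

Lemma negC (x : R) : ((-1)^+true * x)%:C%C = - (x%:C%C) :> C.
Proof. by rewrite expr1 mulN1r; apply: rmorphN. Qed.
Lemma posC (x : R) : ((-1)^+false * x)%:C%C = x%:C%C :> C.
Proof. by rewrite expr0 mul1r. Qed.

Lemma bloch_sum (m : 'I_3 -> R) :
  bloch_state (fun a => (-1) ^+ false * m a) + bloch_state (fun a => (-1) ^+ true * m a) = 1%:M.
Proof.
by apply/mx2P; rewrite /bloch_state !(mxE, ndot1E, negC, posC) /=; field.
Qed.

Lemma E1_bloch (w v : 'I_3 -> R) : unit3 v ->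
  vc v a0 * vc w a0 + vc v a1 * vc w a1 + vc v a2 * vc w a2 = 0 ->
  E1 (bloch_state w) =
  2%:R^-1 *: (bloch_state w + ndot1 (vc v) *m bloch_state w *m ndot1 (vc v)).
Proof.
move=> /unitC hv hd.
have eB : bloch_state w = 2%:R^-1 *: (1%:M + ndot1 (vc w)) by [].
have L : E1 (bloch_state w) = (2%:R^-1)%:M.
  rewrite /E1 G3 tr_bloch addrC subrK mulr1 scale_scalar_mx; congr (_%:M).
  by field.
have Rr : ndot1 (vc v) *m bloch_state w *m ndot1 (vc v) = 2%:R^-1 *: (1%:M - ndot1 (vc w)).
  rewrite eB -scalemxAr -scalemxAl mulmxDr mulmxDl mulmx1 test G2 hv hd.
  by rewrite mulr0 scale0r sub0r scale1r.
rewrite L Rr eB.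
by apply/mx2P; rewrite !(mxE, ndot1E) /=; field.
Qed.

End Qub.

Section Ops.
Variable R : realType.
Local Notation C := (R[i]).
Variable n : nat.
Local Notation M := ('M[C]_(2 ^ n)).

Lemma sum3M (F : 'I_3 -> M) : \sum_(a < 3) F a = F a0 + F a1 + F a2.
Proof.
have e1 : lift ord0 ord0 = a1 by apply: val_inj.
have e2 : lift ord0 (lift ord0 ord0) = a2 :> 'I_3 by apply: val_inj.
have e0 : ord0 = a0 by apply: val_inj.
by rewrite !big_ord_recl big_ord0 addr0 addrA e2 e1 e0. Qed.

Lemma onq_mul (s : 'I_n) (A B : 'M[C]_2) : on_qubit s A *m on_qubit s B = on_qubit s (A *m B).
Proof.
by rewrite /on_qubit tensorn_mul; apply: eq_tensorn => k; case: (k == s); rewrite ?mulmx1.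
Qed.

Lemma onq1 (s : 'I_n) : on_qubit s 1%:M = 1%:M :> M.
Proof.
by rewrite /on_qubit -(@tensorn1 R n); apply: eq_tensorn => k; case: (k == s).
Qed.

Lemma onq_adj (s : 'I_n) (A : 'M[C]_2) : adj (on_qubit s A) = on_qubit s (adj A) :> M.
Proof.
by rewrite /on_qubit tensorn_adj; apply: eq_tensorn => k; case: (k == s); rewrite ?adj1.
Qed.

Lemma onq_comm (s t : 'I_n) (A B : 'M[C]_2) : t != s ->
  on_qubit t A *m on_qubit s B = on_qubit s B *m on_qubit t A :> M.
Proof.
move=> nts; rewrite /on_qubit !tensorn_mul; apply: eq_tensorn => k.
case: (eqVneq k s) => [->|nks]; first by rewrite eq_sym (negbTE nts) mulmx1 mul1mx.
by case: (k == t); rewrite ?mulmx1 ?mul1mx.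
Qed.

Lemma onq_sand (s : 'I_n) (A B : 'M[C]_2) (f : 'I_n -> 'M[C]_2) :
  on_qubit s A *m tensorn f *m on_qubit s B = tensorn (upd f s (A *m f s *m B)) :> M.
Proof.
rewrite /on_qubit !tensorn_mul; apply: eq_tensorn => k; rewrite /upd.
by case: (eqVneq k s) => [->|_]; rewrite ?mulmx1 ?mul1mx.
Qed.

Lemma ndot_onq (v : 'I_3 -> C) (s : 'I_n) : ndot v s = on_qubit s (ndot1 v).
Proof.
rewrite /ndot /ndot1 /on_qubit.
rewrite (_ : (fun l => if l == s then \sum_(a < 3) v a *: pauli a else 1%:M) =
   upd (fun _ => 1%:M) s (\sum_(a < 3) v a *: pauli a)) //.
rewrite tensorn_upd_sum; apply: eq_bigr => a _.
by rewrite tensorn_updZ.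
Qed.

Definition E1' := @E1 R.

Lemma depol_tensor (s : 'I_n) (f : 'I_n -> 'M[C]_2) : depol s (tensorn f) = tensorn (upd f s (E1 (f s))) :> M.
Proof.
rewrite /depol /E1 tensorn_updZ tensorn_updD tensorn_upd_sum tensorn_upd_self.
congr (_ *: (_ + _)); apply: eq_bigr => a _.
by rewrite /sigma onq_sand.
Qed.

Lemma tr_sum (F : 'I_3 -> M) : \tr (\sum_a F a) = \sum_a \tr (F a).
Proof. exact: raddf_sum. Qed.

Lemma tr_depol (s : 'I_n) (X Y : M) : \tr (X *m depol s Y) = \tr (depol s X *m Y).
Proof.
rewrite /depol -scalemxAr -scalemxAl !mxtraceZ; congr (_ * _).
rewrite mulmxDr mulmxDl !mxtraceD; congr (_ + _).
rewrite mulmx_sumr mulmx_suml !tr_sum; apply: eq_bigr => a _.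
by rewrite !mulmxA mxtrace_mulC !mulmxA.
Qed.

Lemma sigma_adj (t : 'I_n) a : adj (sigma t a) = sigma t a :> M.
Proof. by rewrite /sigma onq_adj adj_pauli. Qed.
Lemma sigma_sq (t : 'I_n) a : sigma t a *m sigma t a = 1%:M :> M.
Proof. by rewrite /sigma onq_mul pauli_sq onq1. Qed.

Lemma frob2_unit_r (U Z : M) : U *m adj U = 1%:M -> frob2 (Z *m U) = frob2 Z.
Proof.
move=> hU; rewrite /frob2 adj_mul mxtrace_mulC -mulmxA (mulmxA U) hU mul1mx.
by rewrite mxtrace_mulC.
Qed.

Lemma frob2_unit_l (U Z : M) : adj U *m U = 1%:M -> frob2 (U *m Z) = frob2 Z.
Proof.
by move=> hU; rewrite /frob2 adj_mul -mulmxA (mulmxA (adj U)) hU mul1mx.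
Qed.

Lemma frob2_sand (t : 'I_n) a (Z : M) : frob2 (sigma t a *m Z *m sigma t a) = frob2 Z.
Proof.
rewrite frob2_unit_r ?frob2_unit_l //; by rewrite sigma_adj sigma_sq.
Qed.

Lemma frob2_depol (t : 'I_n) (Z : M) : frob2 (depol t Z) <= frob2 Z.
Proof.
rewrite /depol frob2Z sum3M.
set W0 := sigma t a0 *m Z *m sigma t a0.
set W1 := sigma t a1 *m Z *m sigma t a1.
set W2 := sigma t a2 *m Z *m sigma t a2.
have -> : Z + (W0 + W1 + W2) = (Z + W0) + (W1 + W2) by rewrite !addrA.
have e4 : (4%:R^-1 : C)^* = 4%:R^-1 by rewrite fmorphV rmorph_nat.
rewrite e4.
have h1 := frob2_par (Z + W0) (W1 + W2).
have h2 := frob2_par Z W0.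
have h3 := frob2_par W1 W2.
rewrite /W0 /W1 /W2 !frob2_sand in h2 h3.
have hF := frob2_ge0 Z.
have h4 : frob2 (Z + W0 + (W1 + W2)) <= 16%:R * frob2 Z.
  apply: (le_trans h1).
  have -> : 16%:R * frob2 Z = 2%:R * (4%:R * frob2 Z + 4%:R * frob2 Z) by ring.
  rewrite ler_wpM2l ?ler0n //; apply: lerD.
    by apply: (le_trans h2); rewrite le_eqVlt; apply/orP; left; apply/eqP; ring.
  by apply: (le_trans h3); rewrite le_eqVlt; apply/orP; left; apply/eqP; ring.
have h5 : 0 <= (4%:R^-1 * 4%:R^-1 : C) by rewrite mulr_ge0 // invr_ge0 ler0n.
apply: (le_trans (ler_wpM2l h5 h4)).
rewrite le_eqVlt; apply/orP; left; apply/eqP; by field.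
Qed.

End Ops.

Section Main1.
Variable R : realType.
Local Notation C := (R[i]).
Variable n : nat.
Local Notation M := ('M[C]_(2 ^ n)).

Lemma unit_sign (m : 'I_3 -> R) b : unit3 m -> unit3 (fun a => (-1) ^+ b * m a).
Proof.
rewrite /unit3 => h; apply: (etrans _ h); apply: eq_bigr => a _.
by rewrite exprMn sqrr_sign mul1r.
Qed.

Lemma dot_sign (m v : 'I_3 -> R) b : dot3 m v = 0 ->
  vc v a0 * vc (fun a => (-1) ^+ b * m a) a0 + vc v a1 * vc (fun a => (-1) ^+ b * m a) a1
  + vc v a2 * vc (fun a => (-1) ^+ b * m a) a2 = 0.
Proof.
rewrite /dot3 sum3R /vc => h; rewrite -!rmorphM -!rmorphD.
have -> : v a0 * ((-1) ^+ b * m a0) + v a1 * ((-1) ^+ b * m a1) + v a2 * ((-1) ^+ b * m a2)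
  = (-1) ^+ b * (m a0 * v a0 + m a1 * v a1 + m a2 * v a2) by ring.
by rewrite h mulr0 rmorph0.
Qed.

Variable nperp : 'I_n -> 'I_3 -> R.
Hypothesis hperp : forall j, unit3 (nperp j).

Definition wl (l : {ffun 'I_n -> bool}) j := fun a => (-1) ^+ l j * nperp j a.
Definition rho (l : {ffun 'I_n -> bool}) : M := basis_state nperp l.

Lemma rho_adj l : adj (rho l) = rho l.
Proof. by rewrite /rho /basis_state tensorn_adj; apply: eq_tensorn => k; rewrite adj_bloch. Qed.

Lemma rho_idem l : rho l *m rho l = rho l.
Proof.
by rewrite /rho /basis_state tensorn_mul; apply: eq_tensorn => k; apply: bloch_idem; apply: unit_sign.
Qed.

Lemma rho_tr l : \tr (rho l) = 1.
Proof.
by rewrite /rho /basis_state tensorn_tr; apply: big1 => k _; rewrite tr_bloch.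
Qed.

Lemma rho_sum : \sum_l rho l = 1%:M.
Proof.
rewrite /rho /basis_state.
rewrite (tensorn_sum_ffun (fun j b => bloch_state (fun a => (-1) ^+ b * nperp j a))).
by rewrite -(@tensorn1 R n); apply: eq_tensorn => k; rewrite bloch_sum.
Qed.

Lemma rho_frob l : frob2 (rho l) = 1.
Proof. by rewrite /frob2 rho_adj rho_idem rho_tr. Qed.

Lemma rho_CS l (D : M) : `|\tr (rho l *m D)| ^+ 2 <= \tr (adj D *m rho l *m D).
Proof.
have h := frob2_CS (rho l *m D) (rho_frob l).
move: h; rewrite rho_adj mulmxA rho_idem /frob2 adj_mul rho_adj.
by rewrite -mulmxA (mulmxA (rho l)) rho_idem mulmxA.
Qed.

Lemma tr_sumI (I : finType) (F : I -> M) : \tr (\sum_i F i) = \sum_i \tr (F i).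
Proof. exact: raddf_sum. Qed.

Lemma rho_CS_sum (D : M) : \sum_l `|\tr (rho l *m D)| ^+ 2 <= frob2 D.
Proof.
apply: (le_trans (ler_sum _ (fun l _ => rho_CS l D))).
by rewrite -tr_sumI -mulmx_suml -mulmx_sumr rho_sum mulmx1.
Qed.

End Main1.

Section Num.
Variable R : realType.
Local Notation C := (R[i]).

Lemma CS_sum (I : finType) (a : I -> C) : (forall i, 0 <= a i) ->
  (\sum_i a i) ^+ 2 <= #|I|%:R * \sum_i a i ^+ 2.
Proof.
move=> h0.
have key : forall i j, 2%:R * (a i * a j) <= a i ^+ 2 + a j ^+ 2.
  move=> i j; rewrite -subr_ge0.
  have -> : a i ^+ 2 + a j ^+ 2 - 2%:R * (a i * a j) = (a i - a j) ^+ 2 by ring.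
  by apply: real_exprn_even_ge0 => //; apply: rpredB; apply: ger0_real; exact: h0.
rewrite -(@ler_pM2l _ 2%:R) ?ltr0n //.
apply: (le_trans (y := \sum_i \sum_j (a i ^+ 2 + a j ^+ 2))).
  rewrite expr2 big_distrl /= mulr_sumr; apply: ler_sum => i _.
  by rewrite big_distrr /= mulr_sumr; apply: ler_sum => j _; exact: key.
rewrite le_eqVlt; apply/orP; left; apply/eqP.
under eq_bigr do rewrite big_split /=.
rewrite big_split /=.
have sc : forall c : C, \sum_(j : I) c = #|I|%:R * c.
  by move=> c; rewrite sumr_const [RHS]mulr_natl; apply: congr1; apply: eq_card => x.
under eq_bigr do rewrite sc.
rewrite sc -mulr_sumr; ring.
Qed.

Lemma num_final (a F N : C) : 0 <= a -> 0 < N -> 0 <= F -> a ^+ 2 <= N * F ->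
  N^-1 * (2%:R^-1 * a) <= sqrtC ((4%:R * N)^-1 * F).
Proof.
move=> ha hN hF haF.
have hN0 : N != 0 by rewrite gt_eqF.
have hx : 0 <= N^-1 * (2%:R^-1 * a).
  by apply: mulr_ge0; [rewrite invr_ge0 ltW | apply: mulr_ge0; [rewrite invr_ge0 ler0n|]].
rewrite -(sqrCK hx) ler_sqrtC ?nnegrE ?exprn_ge0 //; last first.
  by rewrite mulr_ge0 // invr_ge0 mulr_ge0 // ?ler0n // ltW.
have -> : (N^-1 * (2%:R^-1 * a)) ^+ 2 = (4%:R * N * N)^-1 * a ^+ 2 by field.
have -> : (4%:R * N)^-1 * F = (4%:R * N * N)^-1 * (N * F) by field.
by apply: ler_wpM2l => //; rewrite invr_ge0 !mulr_ge0 // ?ler0n // ltW.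
Qed.

End Num.

Section Main3.
Variable R : realType.
Local Notation C := (R[i]).
Variable n : nat.
Local Notation M := ('M[C]_(2 ^ n)).

Lemma trN (X : M) : \tr (- X) = - \tr X.
Proof. exact: raddfN. Qed.

Lemma depol_comm (s t : 'I_n) (V : 'M[C]_2) (Y : M) : t != s ->
  comm (on_qubit s V) (depol t Y) = depol t (comm (on_qubit s V) Y).
Proof.
move=> nts; set P := on_qubit s V.
have hc : forall a, P *m sigma t a = sigma t a *m P.
  by move=> a; rewrite /P /sigma (onq_comm _ _ nts).
rewrite /comm /depol -scalemxAr -scalemxAl -scalerBr; congr (_ *: _).
rewrite mulmxDr mulmxDl mulmx_sumr mulmx_suml.
have e : \sum_a sigma t a *m (P *m Y - Y *m P) *m sigma t a =
   \sum_a P *m (sigma t a *m Y *m sigma t a) - \sum_a (sigma t a *m Y *m sigma t a) *m P.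
  rewrite -sumrB; apply: eq_bigr => a _; rewrite mulmxBr mulmxBl; congr (_ - _).
    by rewrite !mulmxA hc.
  by rewrite -!mulmxA hc.
by rewrite e opprD addrACA.
Qed.

Lemma CT_fold (s : 'I_n) (V : 'M[C]_2) (O : M) (L : seq 'I_n) : s \notin L ->
  frob2 (comm (on_qubit s V) (foldr (@depol R n) O L)) <= frob2 (comm (on_qubit s V) O).
Proof.
elim: L => [|t L IH] /=; first by rewrite lexx.
rewrite in_cons negb_or => /andP [hst hsL].
rewrite depol_comm; last by rewrite eq_sym.
exact: (le_trans (frob2_depol _ _) (IH hsL)).
Qed.

Variable nperp : 'I_n -> 'I_3 -> R.
Hypothesis hperp : forall j, unit3 (nperp j).

Section PS.
Variable s : 'I_n.
Variable v : 'I_3 -> R.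
Hypothesis hv : unit3 v.
Hypothesis hd : dot3 (nperp s) v = 0.
Local Notation P := (ndot (vc v) s).

Lemma P_sq : P *m P = 1%:M.
Proof.
rewrite ndot_onq onq_mul test (unitC hv); exact: onq1.
Qed.

Lemma P_adj : adj P = P.
Proof. by rewrite ndot_onq onq_adj adj_ndot1. Qed.

Lemma rho_depol l : depol s (rho nperp l) = 2%:R^-1 *: (rho nperp l + P *m rho nperp l *m P).
Proof.
rewrite /rho /basis_state depol_tensor ndot_onq onq_sand.
set f := (fun j => bloch_state (fun a => (-1) ^+ l j * nperp j a)).
rewrite -(tensorn_upd_self f s) -tensorn_updD -tensorn_updZ.
rewrite /f (E1_bloch hv) //; exact: dot_sign.
Qed.

Lemma xl_eq l (Y : M) : expv (rho nperp l) Y - expv (rho nperp l) (depol s Y) =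
  2%:R^-1 * \tr (rho nperp l *m (Y - P *m Y *m P)).
Proof.
rewrite /expv tr_depol rho_depol -scalemxAl mxtraceZ mulmxDl mxtraceD.
have e : \tr (P *m rho nperp l *m P *m Y) = \tr (rho nperp l *m (P *m Y *m P)).
  by rewrite -!mulmxA mxtrace_mulC !mulmxA.
by rewrite e mulmxDr mulmxN mxtraceD trN; field.
Qed.

Lemma D_frob (Y : M) : frob2 (Y - P *m Y *m P) = frob2 (comm P Y).
Proof.
have -> : Y - P *m Y *m P = - (comm P Y *m P).
  by rewrite /comm mulmxBl -(mulmxA Y) P_sq mulmx1 opprB.
by rewrite frob2N frob2_unit_r // P_adj P_sq.
Qed.

Lemma PS (Y : M) :
  (2 ^ n)%:R^-1 * \sum_l `|expv (rho nperp l) Y - expv (rho nperp l) (depol s Y)|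
  <= sqrtC ((2 ^ (n + 2))%:R^-1 * frob2 (comm P Y)).
Proof.
set D := Y - P *m Y *m P.
under eq_bigr do rewrite xl_eq normrM.
rewrite -mulr_sumr ger0_norm ?invr_ge0 ?ler0n //.
have -> : (2 ^ (n + 2))%:R = 4%:R * (2 ^ n)%:R :> C by rewrite expnD mulnC natrM.
rewrite -D_frob -/D.
apply: num_final.
- by apply: sumr_ge0 => l _.
- by rewrite ltr0n expn_gt0.
- exact: frob2_ge0.
apply: le_trans; first by apply: CS_sum => l; exact: normr_ge0.
rewrite card_ffun card_bool card_ord natrX.
apply: ler_wpM2l; first by rewrite exprn_ge0 ?ler0n.
apply: (le_trans _ (rho_CS_sum hperp D)).
by rewrite le_eqVlt; apply/orP; left; apply/eqP; apply: eq_bigr => l _.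
Qed.

End PS.

End Main3.

Section Tele.
Variable R : realType.
Local Notation C := (R[i]).
Variable n : nat.
Local Notation M := ('M[C]_(2 ^ n)).
Variable nperp : 'I_n -> 'I_3 -> R.
Hypothesis hperp : forall j, unit3 (nperp j).
Variable nv : 'I_n -> 'I_3 -> R.
Variable S : {set 'I_n}.
Hypothesis hnv : forall s, s \in S -> unit3 (nv s).
Hypothesis hdot : forall j, j \in S -> dot3 (nperp j) (nv j) = 0.
Variable O : M.

Lemma TL (L : seq 'I_n) : uniq L -> {subset L <= S} ->
  (2 ^ n)%:R^-1 * \sum_l `|expv (rho nperp l) O - expv (rho nperp l) (foldr (@depol R n) O L)|
  <= \sum_(s <- L) sqrtC ((2 ^ (n + 2))%:R^-1 * frob2 (comm (ndot (vc (nv s)) s) O)).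
Proof.
have hN : 0 <= ((2 ^ n)%:R^-1 : C) by rewrite invr_ge0 ler0n.
elim: L => [|s L IH] /=.
  move=> _ _; rewrite big_nil.
  under eq_bigr do rewrite subrr normr0.
  by rewrite big1 // mulr0.
move=> /andP [hsL huL] hsub.
have hsS : s \in S by apply: hsub; exact: mem_head.
have hsubL : {subset L <= S} by move=> x hx; apply: hsub; rewrite in_cons hx orbT.
set Y := foldr (@depol R n) O L.
rewrite big_cons.
apply: (le_trans (y := (2 ^ n)%:R^-1 * \sum_l
   (`|expv (rho nperp l) O - expv (rho nperp l) Y| +
    `|expv (rho nperp l) Y - expv (rho nperp l) (depol s Y)|))).
  by apply: ler_wpM2l => //; apply: ler_sum => l _; exact: ler_distD.
rewrite big_split mulrDr addrC; apply: lerD; last exact: IH.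
apply: (le_trans (PS hperp (hnv hsS) (hdot hsS) Y)).
rewrite ler_sqrtC ?nnegrE; first last.
- by rewrite mulr_ge0 // ?invr_ge0 ?ler0n // frob2_ge0.
- by rewrite mulr_ge0 // ?invr_ge0 ?ler0n // frob2_ge0.
apply: ler_wpM2l; first by rewrite invr_ge0 ler0n.
by rewrite /Y ndot_onq; apply: CT_fold.
Qed.

End Tele.

Theorem theorem2 (R : realType) (n : nat) (U : 'M[R[i]]_(2 ^ n))
  (alpha : {set 'I_(2 * n)}) (b : int) (S : {set 'I_n})
  (nv : 'I_n -> 'I_3 -> R) (M : 'I_n -> 'M[R[i]]_3) (nperp : 'I_n -> 'I_3 -> R) :
  matchgate U ->
  let B := ('i ^ b) *: majorana_conf alpha in
  adj B = B ->
  (forall s, s \in S -> unit3 (nv s)) ->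
  (forall s, s \in S -> forall v : 'I_3 -> R[i],
      (2 ^ (n + 2))%:R^-1 * frob2 (comm (ndot v s) (adj U *m B *m U)) = qform v (M s)) ->
  (forall j, unit3 (nperp j)) ->
  (forall j, j \in S -> dot3 (nperp j) (nv j) = 0) ->
  let O := adj U *m B *m U in
  (2 ^ n)%:R^-1 *
    \sum_(l : {ffun 'I_n -> bool})
       `| expv (basis_state nperp l) O - expv (basis_state nperp l) (depolS S O) |
  <= \sum_(s in S) sqrtC (qform (fun a => (nv s a)%:C%C) (M s)).
Proof.
move=> _ B _ hnv hM hperp hdot.
rewrite (eq_bigr (fun s => sqrtC ((2 ^ (n + 2))%:R^-1 *
   frob2 (comm (ndot (vc (nv s)) s) (adj U *m B *m U))))); last first.
  by move=> s hs; rewrite -(hM s hs).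
rewrite -big_enum /depolS.
apply: (TL hperp hnv hdot); first exact: enum_uniq.
by move=> x; rewrite mem_enum.
Qed.
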